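(* Let $V$ be a finite vertex set with $|V| = n$ and let $\{k_u\}_{u\in V}$ be a degree sequence with $k_u \ge 1$ for all $u$, such that there are at least two distinct multiloop-graphs on $V$ with degree sequence $\{k_u\}$. Then the graph of multiloop-graphs $\mathcal{G}_{ll}(\{k_u\})$ is connected if and only if both of the following hold: (1) there exists a vertex $u$ with $k_u$ odd; and (2) there exists a vertex $v$ such that $k_v-(n-1)$ is negative or odd.
   Context: All graphs are on a fixed labeled vertex set $V$; a graph is a multiset $E$ of unordered pairs $(u,v)$ with $u,v\in V$, where a pair $(u,u)$ is a self-loop and an edge occurring more than once is a multiedge (or multiple self-loop, if it is a loop). The degree $k_u$ of $u$ is the number of edge-endpoints at $u$, so each self-loop at $u$ contributes $2$ to $k_u$. A multiloop-graph is such a graph in which self-loops may occur with any multiplicity but every non-loop edge $(u,v)$, $u\ne v$, occurs at most once. A double edge swap $(u,v),(x,y)\leadsto(u,x),(v,y)$ on a graph removes one copy of each of two edge occurrences $(u,v)$ and $(x,y)$ (loops allowed, i.e. possibly $u=v$ or $x=y$) and adds the edges $(u,x)$ and $(v,y)$; since edges are unordered, either pairing of endpoints may be used. It preserves the degree sequence. The graph of multiloop-graphs $\mathcal{G}_{ll}(\{k_u\})$ has as vertices all multiloop-graphs on $V$ with degree sequence $\{k_u\}$, with two distinct such graphs adjacent if one is obtained from the other by a single double edge swap (so every intermediate graph along a path must itself be a multiloop-graph). *)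

(* Defs.v *)
From mathcomp Require Import all_boot.
From Stdlib Require Import Relations.
Set Implicit Arguments. Unset Strict Implicit. Unset Printing Implicit Defensive.

(* A graph on the finite vertex set V is a multiset of unordered pairs,
   represented by its multiplicity function m : V * V -> nat, required to be
   symmetric: m (u,v) is the number of copies of the edge {u,v}
   (for u = v: the number of self-loops at u). *)
Definition mgraph (V : finType) := {ffun V * V -> nat}.

Definition symmetric_mg (V : finType) (m : mgraph V) : Prop :=
  forall u v, m (u, v) = m (v, u).

(* degree: each non-loop edge contributes 1, each self-loop contributes 2 *)
Definition deg (V : finType) (m : mgraph V) (u : V) : nat :=
  \sum_(v : V) m (u, v) + m (u, u).

Definition multiloop (V : finType) (m : mgraph V) : Prop :=
  symmetric_mg m /\ forall u v, u != v -> m (u, v) <= 1.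

Definition is_ml_graph (V : finType) (k : V -> nat) (m : mgraph V) : Prop :=
  multiloop m /\ forall u, deg m u = k u.

Definition add_edge (V : finType) (m : mgraph V) (u v : V) : mgraph V :=
  [ffun p => m p + ((p == (u, v)) || (p == (v, u)))].
Definition rem_edge (V : finType) (m : mgraph V) (u v : V) : mgraph V :=
  [ffun p => m p - ((p == (u, v)) || (p == (v, u)))].

(* The condition that the
   second edge is still present after removing the first ensures that the two
   occurrences are distinct. *)
Definition double_edge_swap (V : finType) (m m' : mgraph V) : Prop :=
  exists u v x y : V,
    0 < m (u, v) /\ 0 < (rem_edge m u v) (x, y) /\
    m' = add_edge (add_edge (rem_edge (rem_edge m u v) x y) u x) v y.

Definition ml_adj (V : finType) (k : V -> nat) (m m' : mgraph V) : Prop :=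
  is_ml_graph k m /\ is_ml_graph k m' /\ m <> m' /\
  (double_edge_swap m m' \/ double_edge_swap m' m).

Definition ml_connected (V : finType) (k : V -> nat) : Prop :=
  forall m m', is_ml_graph k m -> is_ml_graph k m' ->
    clos_refl_trans (mgraph V) (ml_adj k) m m'.

(* Main.v *)
Require Import Defs.
From mathcomp Require Import all_boot zify.
From Stdlib Require Import Relations.
Set Implicit Arguments. Unset Strict Implicit. Unset Printing Implicit Defensive.


Ltac neqs := repeat match goal with
 | H : is_true (?x != ?y) |- context [?x == ?y] => rewrite (negbTE H)
 | H : is_true (?x != ?y) |- context [?y == ?x] => rewrite [y == x]eq_sym (negbTE H)
 end.

Section Basic.
Variable V : finType.
Implicit Types (m : mgraph V) (u v a b c d s t : V).

Definition eb u v (p : V * V) : bool := (p == (u, v)) || (p == (v, u)).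

Lemma ebE u v s t : eb u v (s, t) = ((s == u) && (t == v)) || ((s == v) && (t == u)).
Proof. by rewrite /eb !xpair_eqE. Qed.

Lemma eb_sym u v s t : eb u v (t, s) = eb u v (s, t).
Proof. rewrite !ebE; by case: (s == u); case: (t == v); case: (s == v); case: (t == u). Qed.

Lemma eb_symuv u v p : eb v u p = eb u v p.
Proof. by rewrite /eb orbC. Qed.

Lemma eb_pt u v s t : eb u v (s, t) = eb s t (u, v).
Proof. rewrite !ebE [u == s]eq_sym [v == t]eq_sym [u == t]eq_sym [v == s]eq_sym.
by case: (s == u); case: (t == v); case: (s == v); case: (t == u). Qed.

Lemma addE m u v p : add_edge m u v p = m p + eb u v p.
Proof. by rewrite /add_edge ffunE. Qed.

Lemma remE m u v p : rem_edge m u v p = m p - eb u v p.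
Proof. by rewrite /rem_edge ffunE. Qed.

Lemma rem_sym m u v : symmetric_mg m -> symmetric_mg (rem_edge m u v).
Proof. by move=> hs s t; rewrite !remE hs eb_sym. Qed.

Lemma add_sym m u v : symmetric_mg m -> symmetric_mg (add_edge m u v).
Proof. by move=> hs s t; rewrite !addE hs eb_sym. Qed.

Lemma rem_exact m u v p : symmetric_mg m -> 0 < m (u, v) ->
  rem_edge m u v p + eb u v p = m p.
Proof.
move=> hs h; rewrite remE; case E: (eb u v p); last by rewrite subn0 addn0.
move: E; rewrite /eb => /orP [/eqP -> | /eqP ->]; first by lia.
by rewrite hs; lia.
Qed.

Definition sw m a b c d := add_edge (add_edge (rem_edge (rem_edge m a b) c d) a c) b d.

Lemma swR m a b c d p :
  sw m a b c d p = rem_edge (rem_edge m a b) c d p + eb a c p + eb b d p.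
Proof. by rewrite /sw !addE. Qed.

Lemma sw_sym m a b c d : symmetric_mg m -> symmetric_mg (sw m a b c d).
Proof. by move=> hs; do 2 apply: add_sym; do 2 apply: rem_sym. Qed.

Lemma swE m a b c d p : symmetric_mg m -> 0 < m (a, b) -> 0 < rem_edge m a b (c, d) ->
  sw m a b c d p + eb a b p + eb c d p = m p + eb a c p + eb b d p.
Proof.
move=> hs h1 h2; rewrite swR.
have e1 := rem_exact p hs h1.
have e2 := rem_exact p (rem_sym a b hs) h2.
lia.
Qed.


Lemma sum_eq1 (x : V) : \sum_(v : V) ((v == x) : nat) = 1.
Proof. by rewrite (bigD1 x) //= eqxx big1 // => v /negbTE ->. Qed.

Lemma degeb a b u : \sum_(v : V) (eb a b (u, v) : nat) + eb a b (u, u) = (u == a) + (u == b).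
Proof.
case: (eqVneq u a) => [->|hua].
  case: (eqVneq a b) => [<-|hab].
    rewrite (eq_bigr (fun v => (v == a) : nat)) ?sum_eq1; first by rewrite ebE eqxx.
    by move=> v _; rewrite ebE eqxx /= orbb.
  rewrite (eq_bigr (fun v => (v == b) : nat)) ?sum_eq1.
    by rewrite ebE eqxx (negbTE hab) /=.
  by move=> v _; rewrite ebE eqxx (negbTE hab) /= orbF.
case: (eqVneq u b) => [hub|hub].
  subst u.
  rewrite (eq_bigr (fun v => (v == a) : nat)) ?sum_eq1.
    by rewrite ebE eqxx (negbTE hua).
  by move=> v _; rewrite ebE eqxx (negbTE hua) /=.
rewrite big1; first by rewrite ebE (negbTE hua) (negbTE hub).
by move=> v _; rewrite ebE (negbTE hua) (negbTE hub).
Qed.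

Lemma deg_sw m a b c d u : symmetric_mg m -> 0 < m (a, b) -> 0 < rem_edge m a b (c, d) ->
  deg (sw m a b c d) u = deg m u.
Proof.
move=> hs h1 h2.
have H : \sum_(v : V) (sw m a b c d (u, v) + eb a b (u, v) + eb c d (u, v))
       = \sum_(v : V) (m (u, v) + eb a c (u, v) + eb b d (u, v)).
  by apply: eq_bigr => v _; apply: swE.
rewrite !big_split /= in H.
have := swE (u, u) hs h1 h2.
have := degeb a b u; have := degeb c d u; have := degeb a c u; have := degeb b d u.
rewrite /deg; lia.
Qed.

Definition L m := \sum_(u : V) m (u, u).

Lemma sumdiag a b : \sum_(u : V) (eb a b (u, u) : nat) = (a == b).
Proof.
case: (eqVneq a b) => [<-|hab].
  rewrite (eq_bigr (fun v => (v == a) : nat)) ?sum_eq1 //.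
  by move=> v _; rewrite ebE orbb andbb.
rewrite big1 // => v _; rewrite ebE.
case: (eqVneq v a) => [->|_]; last by rewrite andbF.
by rewrite (negbTE hab).
Qed.

Lemma L_sw m a b c d : symmetric_mg m -> 0 < m (a, b) -> 0 < rem_edge m a b (c, d) ->
  L (sw m a b c d) + (a == b) + (c == d) = L m + (a == c) + (b == d).
Proof.
move=> hs h1 h2.
have H : \sum_(v : V) (sw m a b c d (v, v) + eb a b (v, v) + eb c d (v, v))
       = \sum_(v : V) (m (v, v) + eb a c (v, v) + eb b d (v, v)).
  by apply: eq_bigr => v _; apply: swE.
rewrite !big_split /= !sumdiag in H.
rewrite /L; lia.
Qed.

Lemma ml_intro m : symmetric_mg m -> (forall s t : V, s != t -> m (s, t) <= 1) -> multiloop m.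
Proof. by move=> h1 h2; split. Qed.
Lemma ml_le1 m : multiloop m -> forall s t : V, s != t -> m (s, t) <= 1.
Proof. by case. Qed.
Lemma ml_sym m : multiloop m -> symmetric_mg m.
Proof. by case. Qed.

Lemma sw_ml m a b c d : multiloop m -> 0 < m (a, b) -> 0 < rem_edge m a b (c, d) ->
  (a != c -> m (a, c) = 0) -> (b != d -> m (b, d) = 0) -> (a != c -> ~~ eb a c (b, d)) ->
  multiloop (sw m a b c d).
Proof.
move=> hml h1 h2 hac hbd hx; have hs := ml_sym hml; have hl := ml_le1 hml.
apply: ml_intro; first exact: sw_sym.
move=> s t hst; have H := swE (s, t) hs h1 h2.
case E1: (eb a c (s, t)).
  have [Hm Hb] : m (s, t) = 0 /\ eb b d (s, t) = false.
    move: E1 hst => /orP [/eqP [-> ->] | /eqP [-> ->]] hst.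
      by rewrite hac // eb_pt (negbTE (hx hst)).
    rewrite hs eq_sym in hst *; rewrite hac // eb_sym eb_pt.
    by rewrite (negbTE (hx hst)).
  rewrite E1 Hm Hb /= in H; lia.
case E2: (eb b d (s, t)).
  have Hm : m (s, t) = 0.
    move: E2 hst => /orP [/eqP [-> ->] | /eqP [-> ->]] hst.
      by rewrite hbd.
    by rewrite hs hbd // eq_sym.
  rewrite E1 E2 Hm /= in H; lia.
rewrite E1 E2 /= in H; have := hl s t hst; lia.
Qed.

End Basic.

Section Valid.
Variable V : finType.
Variable k : V -> nat.
Implicit Types (m : mgraph V) (u v a b c d s t : V).

Definition valid m := is_ml_graph k m.
Definition reach := clos_refl_trans (mgraph V) (ml_adj k).
Definition nd m u := \sum_(v | v != u) m (u, v).
Definition adj m s t := (s != t) && (0 < m (s, t)).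

Lemma deg_nd m u : deg m u = nd m u + 2 * m (u, u).
Proof. by rewrite /deg (bigD1 u) //= /nd; lia. Qed.

Lemma valid_k m u : valid m -> k u = nd m u + 2 * m (u, u).
Proof. by case=> _ h; rewrite -h deg_nd. Qed.

Lemma valid_ml m : valid m -> multiloop m. Proof. by case. Qed.
Lemma valid_sym m : valid m -> symmetric_mg m. Proof. by case=> [[]]. Qed.
Lemma valid_le1 m s t : valid m -> s != t -> m (s, t) <= 1.
Proof. by move=> /valid_ml /ml_le1; apply. Qed.

Lemma adj_sym m s t : valid m -> adj m s t = adj m t s.
Proof. by move=> hv; rewrite /adj eq_sym (valid_sym hv). Qed.

Lemma adj_1 m s t : valid m -> adj m s t -> m (s, t) = 1.
Proof. move=> hv /andP [h1 h2]; have := valid_le1 hv h1; lia. Qed.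

Lemma nadj_0 m s t : s != t -> ~~ adj m s t -> m (s, t) = 0.
Proof. by rewrite /adj => -> /=; rewrite lt0n negbK => /eqP. Qed.

Lemma adj_neq m s t : adj m s t -> s != t.
Proof. by case/andP. Qed.

Lemma nd_card m u : valid m -> nd m u = #|[set z | adj m u z]|.
Proof.
move=> hv; rewrite /nd -sum1_card big_mkcond /= [in RHS]big_mkcond /=.
apply: eq_bigr => z _; rewrite inE /adj eq_sym.
case: (eqVneq z u) => [->|hz] //=.
have := valid_le1 hv (t:=z) (s:=u); rewrite eq_sym hz => /(_ isT).
by case: (m (u, z)) => [|[|]].
Qed.

Lemma odd_nd m u : valid m -> odd (k u) = odd (nd m u).
Proof. by move=> hv; rewrite (valid_k u hv) oddD oddM /= addbF. Qed.

Lemma ml_adj_sym m m' : ml_adj k m m' -> ml_adj k m' m.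
Proof. by case=> [h1 [h2 [h3 h4]]]; split => //; split => //; split; [apply: nesym | tauto]. Qed.

Lemma reach_sym m m' : reach m m' -> reach m' m.
Proof.
elim=> [x y h | x | x y z _ h1 _ h2]; first by apply: rt_step; apply: ml_adj_sym.
  exact: rt_refl.
exact: rt_trans h2 h1.
Qed.

Lemma step m a b c d : valid m -> 0 < m (a, b) -> 0 < rem_edge m a b (c, d) ->
  multiloop (sw m a b c d) -> valid (sw m a b c d) /\ reach m (sw m a b c d).
Proof.
move=> hv h1 h2 hml.
have hv' : valid (sw m a b c d).
  split => // u; rewrite deg_sw //; [by case: hv | exact: valid_sym].
split => //.
case: (eqVneq m (sw m a b c d)) => [<-|hne]; first exact: rt_refl.
apply: rt_step; split => //; split => //; split; first exact/eqP.
by left; exists a, b, c, d.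
Qed.

Lemma valid_eq m m' : valid m -> valid m' ->
  (forall s t, s != t -> m (s, t) = m' (s, t)) -> m = m'.
Proof.
move=> hv hv' h; apply/ffunP => [[s t]].
case: (eqVneq s t) => [<-|hst]; last exact: h.
have e1 := valid_k s hv; have e2 := valid_k s hv'.
have : nd m s = nd m' s by apply: eq_bigr => z hz; apply: h; rewrite eq_sym.
move=> e3; rewrite e3 in e1; move: e1 e2; set x := m (s, s); set y := m' (s, s); lia.
Qed.

Lemma L_le m : valid m -> L m <= \sum_(u : V) k u.
Proof.
move=> hv; rewrite /L; apply: leq_sum => u _; rewrite (valid_k u hv); lia.
Qed.

End Valid.

Section Iso.
Variable V : finType.
Variable k : V -> nat.
Implicit Types (m : mgraph V) (u v a b c d s t : V).

Lemma sw_rev m a b c d : symmetric_mg m -> 0 < m (a, b) -> 0 < rem_edge m a b (c, d) ->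
  [/\ 0 < sw m a b c d (a, c), 0 < rem_edge (sw m a b c d) a c (b, d) &
      sw (sw m a b c d) a c b d = m].
Proof.
move=> hs h1 h2.
have g1 : 0 < sw m a b c d (a, c) by rewrite swR ebE !eqxx /=; lia.
have g2 : 0 < rem_edge (sw m a b c d) a c (b, d).
  rewrite remE swR [eb b d _]ebE !eqxx /=; lia.
split => //; apply/ffunP => p.
have H1 := swE p (sw_sym a b c d hs) g1 g2.
have H2 := swE p hs h1 h2.
have : sw (sw m a b c d) a c b d p + (eb a c p + eb b d p) = m p + (eb a c p + eb b d p) by rewrite !addnA H1 H2.
by move/eqP; rewrite eqn_add2r => /eqP.
Qed.

Lemma dsw_rev m m' : symmetric_mg m' -> double_edge_swap m' m -> double_edge_swap m m'.
Proof.
move=> hs [a [b [c [d [h1 [h2 ->]]]]]].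
have [g1 g2 g3] := sw_rev hs h1 h2.
by exists a, c, b, d; split => //; split => //; rewrite -/(sw _ _ _ _ _) g3.
Qed.

Lemma not_conn m0 z : valid k m0 -> valid k z -> z <> m0 ->
  (forall z, valid k z -> double_edge_swap m0 z -> z = m0) -> ~ ml_connected k.
Proof.
move=> hv0 hvz hne hP hc.
have := hc m0 z hv0 hvz => /clos_rt_rt1n_iff h.
case: h hne => [|y w hadj _ _]; first by move=> /(_ erefl).
case: hadj => [_ [hy [hne' hsw]]].
apply: hne'; symmetry; apply: hP => //.
case: hsw => hsw; first by []. by apply: dsw_rev => //; apply: (valid_sym hy).
Qed.

Lemma eb_off a s t : s != t -> eb a a (s, t) = false.
Proof.
move=> hst; rewrite ebE orbb; apply/negP => /andP [/eqP hs /eqP ht].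
by move: hst; rewrite hs ht eqxx.
Qed.

Definition mloops : mgraph V := [ffun p => if p.1 == p.2 then (k p.1)./2 else 0].

Lemma mloops_sym : symmetric_mg mloops.
Proof.
move=> s t; rewrite !ffunE /=; case: (eqVneq s t) => [->|h] //.
Qed.

Lemma mloops_valid : (forall u, ~~ odd (k u)) -> valid k mloops.
Proof.
move=> hev; split.
  apply: ml_intro; first exact: mloops_sym.
  by move=> s t hst; rewrite ffunE /= (negbTE hst).
move=> u; rewrite deg_nd /nd big1; last by move=> v hv; rewrite ffunE /= eq_sym (negbTE hv).
rewrite ffunE /= eqxx; have := odd_double_half (k u); rewrite (negbTE (hev u)) /=; lia.
Qed.

Lemma mloops_iso z : (forall u, ~~ odd (k u)) ->
  valid k z -> double_edge_swap mloops z -> z = mloops.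
Proof.
move=> hev hz [a [b [c [d [h1 [h2 hE]]]]]].
have hab : a = b.
  move: h1; rewrite ffunE /=; by case: eqVneq.
subst b.
have hcd : c = d.
  move: h2; rewrite remE ffunE /=; case: eqVneq => //.
subst d.
apply: (valid_eq hz (mloops_valid hev)) => s t hst.
have hz1 : sw mloops a a c c (s, t) <= 1 by have := valid_le1 hz hst; rewrite hE.
rewrite hE -/(sw mloops a a c c).
have H := swE (s, t) mloops_sym h1 h2.
rewrite !eb_off // in H.
have -> : mloops (s, t) = 0 by rewrite ffunE /= (negbTE hst).
move: H hz1; set X := sw _ _ _ _ _ _; set Y := eb a c _; set Z := mloops _.
have -> : Z = 0 by rewrite /Z ffunE /= (negbTE hst).
lia.
Qed.

Lemma card_neq u : #|[set x : V | x != u]| = #|V|.-1.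
Proof. by rewrite -(cardC1 u); apply: eq_card => x; rewrite inE. Qed.

Definition mcomp : mgraph V :=
  [ffun p => if p.1 == p.2 then (k p.1 - #|V|.-1)./2 else 1].

Lemma mcomp_sym : symmetric_mg mcomp.
Proof. by move=> s t; rewrite !ffunE /=; case: (eqVneq s t) => [->|h]. Qed.

Lemma mcomp_valid : (forall u, #|V|.-1 <= k u /\ ~~ odd (k u - #|V|.-1)) -> valid k mcomp.
Proof.
move=> hc; split.
  apply: ml_intro; first exact: mcomp_sym.
  by move=> s t hst; rewrite ffunE /= (negbTE hst).
move=> u; rewrite deg_nd /nd (eq_bigr (fun _ => 1)); last first.
  by move=> v hv; rewrite ffunE /= eq_sym (negbTE hv).
rewrite sum1dep_card card_neq ffunE /= eqxx.
have [h1 h2] := hc u.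
have := odd_double_half (k u - #|V|.-1); rewrite (negbTE h2) /=. move: h1; set n1 := #|V|.-1; lia.
Qed.

Lemma comb a b c d :
  (forall s t, s != t -> eb a c (s, t) + eb b d (s, t) <= eb a b (s, t) + eb c d (s, t)) ->
  (c != d -> eb a b (c, d) = false) ->
  forall s t, s != t -> eb a b (s, t) + eb c d (s, t) <= eb a c (s, t) + eb b d (s, t).
Proof.
move=> H H2 s t hst.
case: (eqVneq a c) => [hac|hac].
  subst c; case: (eqVneq b d) => [hbd|hbd].
    subst d; case: (eqVneq a b) => [hab|hab]; first by subst b.
    by move: (H2 hab); rewrite ebE !eqxx.
  case: (eqVneq d a) => [hda|hda].
    by subst d; rewrite (eb_symuv a b); lia.
  case: (eqVneq b a) => [hba|hba].
    by subst b; lia.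
  move: (H b d hbd); rewrite !ebE !eqxx; neqs; done.
case: (eqVneq c b) => [hcb|hcb].
  by subst c; lia.
case: (eqVneq a d) => [had|had].
  by subst d; rewrite (eb_symuv a c) (eb_symuv a b); lia.
move: (H a c hac); rewrite !ebE !eqxx; neqs; rewrite /= ?andbF ?orbF; by case: (_ && _).
Qed.

Lemma mcomp_iso z : (forall u, #|V|.-1 <= k u /\ ~~ odd (k u - #|V|.-1)) ->
  valid k z -> double_edge_swap mcomp z -> z = mcomp.
Proof.
move=> hc hz [a [b [c [d [h1 [h2 hE]]]]]].
apply: (valid_eq hz (mcomp_valid hc)) => s t hst.
rewrite hE -/(sw mcomp a b c d).
have H : forall s t, s != t -> eb a c (s, t) + eb b d (s, t) <= eb a b (s, t) + eb c d (s, t).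
  move=> s' t' hst'.
  have hz1 : sw mcomp a b c d (s', t') <= 1 by have := valid_le1 hz hst'; rewrite hE.
  have H := swE (s', t') mcomp_sym h1 h2.
  move: H hz1; set X := sw _ _ _ _ _ _; set Z := mcomp _.
  have -> : Z = 1 by rewrite /Z ffunE /= (negbTE hst').
  lia.
have H2 : c != d -> eb a b (c, d) = false.
  move=> hcd; move: h2; rewrite remE ffunE /= (negbTE hcd).
  by case: (eb a b (c, d)).
have := comb H H2 hst.
have := swE (s, t) mcomp_sym h1 h2.
have hz1 : sw mcomp a b c d (s, t) <= 1 by have := valid_le1 hz hst; rewrite hE.
move: hz1; set X := sw _ _ _ _ _ _; set Z := mcomp _.
have -> : Z = 1 by rewrite /Z ffunE /= (negbTE hst).
lia.
Qed.

End Iso.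


Section Moves.
Variable V : finType.
Variable k : V -> nat.
Implicit Types (m : mgraph V) (u v w a b c d s t y : V).

Lemma move_gen m a b c d : valid k m -> 0 < m (a, b) -> 0 < rem_edge m a b (c, d) ->
  (a != c -> m (a, c) = 0) -> (b != d -> m (b, d) = 0) -> (a != c -> ~~ eb a c (b, d)) ->
  [/\ valid k (sw m a b c d), reach k m (sw m a b c d) &
      L (sw m a b c d) + (a == b) + (c == d) = L m + (a == c) + (b == d)].
Proof.
move=> hv h1 h2 h3 h4 h5.
have hml := sw_ml (valid_ml hv) h1 h2 h3 h4 h5.
have [g1 g2] := step hv h1 h2 hml.
split => //; apply: L_sw => //; exact: valid_sym hv.
Qed.

Lemma adj_pos m s t : adj m s t -> 0 < m (s, t).
Proof. by case/andP. Qed.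

Lemma moveB m u v y : valid k m -> adj m u v -> adj m u y -> v != y -> ~~ adj m v y ->
  exists m', [/\ valid k m', reach k m m' & L m' = (L m).+1].
Proof.
move=> hv huv huy hvy hn.
have hs := valid_sym hv.
have nuv := adj_neq huv; have nuy := adj_neq huy.
have h1 := adj_pos huv.
have h2 : 0 < rem_edge m u v (u, y).
  rewrite remE ebE eqxx; neqs; rewrite /= (adj_1 hv huy); done.
have [g1 g2 g3] := move_gen hv h1 h2 ltac:(by rewrite eqxx) (fun h => nadj_0 h hn) ltac:(by rewrite eqxx).
exists (sw m u v u y); split => //; move: g3; rewrite eqxx; neqs; rewrite /= => g3; clear -g3; lia.
Qed.

Ltac ebsimp := rewrite ?ebE ?eqxx; neqs; rewrite /= ?andbF ?andbT ?orbF ?orbT.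

Definition transb m := forall a b c, adj m a b -> adj m b c -> a != c -> adj m a c.

Lemma moveAB m u v y w w' : valid k m -> transb m -> adj m u v -> adj m u y -> v != y ->
  adj m w w' -> w != u -> ~~ adj m u w ->
  exists m', [/\ valid k m', reach k m m' & L m' = (L m).+1].
Proof.
move=> hv htr huv huy hvy hww hwu hnuw.
have hs := valid_sym hv.
have asym : forall s t, adj m s t = adj m t s := fun s t => adj_sym s t hv.
have nuv := adj_neq huv; have nuy := adj_neq huy; have nww := adj_neq hww.
have hw'u : w' != u.
  by apply: (contraNneq _ hnuw) => e; rewrite asym -e.
have hnuw' : ~~ adj m u w'.
  apply: (contraNN _ hnuw) => hh; rewrite asym.
  by apply: (htr _ w'); rewrite // asym.
have hnvw' : ~~ adj m v w'.
  apply: (contraNN _ hnuw') => hh; rewrite asym.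
  by apply: (htr _ v); rewrite // asym.
have hnwy : ~~ adj m w y.
  apply: (contraNN _ hnuw) => hh; rewrite asym.
  by apply: (htr _ y); rewrite // asym.
have hwv : w != v by apply: (contraNneq _ hnuw) => ->.
have hwy : w != y by apply: (contraNneq _ hnuw) => ->.
have hw'v : w' != v by apply: (contraNneq _ hnuw') => ->.
have hw'y : w' != y by apply: (contraNneq _ hnuw') => ->.
have a1 := adj_pos huv.
have a2 : 0 < rem_edge m u v (w, w').
  rewrite remE; ebsimp; by rewrite subn0 adj_pos.
have a3 : u != w -> m (u, w) = 0 by move=> hh; apply: nadj_0.
have a4 : v != w' -> m (v, w') = 0 by move=> hh; apply: nadj_0.
have a5 : u != w -> ~~ eb u w (v, w') by move=> _; ebsimp.
have [g1 g2 g3] := move_gen hv a1 a2 a3 a4 a5.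
set m1 := sw m u v w w' in g1 g2 g3.
have e1 := swE (u, w) hs a1 a2.
have e2 := swE (u, y) hs a1 a2.
have e3 := swE (w, y) hs a1 a2.
move: e1 e2 e3; ebsimp; rewrite -/m1 => e1 e2 e3.
have hs1 := valid_sym g1.
have b1 : 0 < m1 (u, w) by clear -e1; lia.
have b2 : 0 < rem_edge m1 u w (u, y).
  rewrite remE; ebsimp; rewrite subn0; move: (adj_1 hv huy) => hh1; clear -e2 hh1; lia.
have b3 : w != y -> m1 (w, y) = 0.
  move=> _; rewrite (nadj_0 hwy hnwy) in e3; clear -e3; lia.
have [f1 f2 f3] := move_gen g1 b1 b2 ltac:(by rewrite eqxx) b3 ltac:(by rewrite eqxx).
exists (sw m1 u w u y); split => //; first exact: rt_trans g2 f2.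
move: g3 f3; ebsimp => g3 f3; clear -g3 f3; lia.
Qed.

Lemma moveCBB m u v y d w : valid k m -> adj m u v -> adj m u y -> adj m y v ->
  adj m u d -> d != v -> d != y -> w != u -> (forall z, ~~ adj m w z) -> 1 <= k w ->
  exists m', [/\ valid k m', reach k m m' & L m' = (L m).+1].
Proof.
move=> hv huv huy hyv hud hdv hdy hwu hiso hkw.
have hs := valid_sym hv.
have asym : forall s t, adj m s t = adj m t s := fun s t => adj_sym s t hv.
have nuv := adj_neq huv; have nuy := adj_neq huy; have nyv := adj_neq hyv.
have nud := adj_neq hud.
have hwv : w != v by apply: (contraNneq _ (hiso u)) => ->; rewrite asym.
have hwy : w != y by apply: (contraNneq _ (hiso u)) => ->; rewrite asym.
have hwd : w != d by apply: (contraNneq _ (hiso u)) => ->; rewrite asym.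
have hnuw : ~~ adj m u w by rewrite asym.
have hnvw : ~~ adj m v w by rewrite asym.
have hnwd : ~~ adj m w d by [].
have hww : 0 < m (w, w).
  have e := valid_k w hv; rewrite (nd_card _ hv) in e.
  have e0 : [set z | adj m w z] = set0.
    by apply/setP => z; rewrite inE (negbTE (hiso z)) in_set0.
  by move: e; rewrite e0 cards0 => e; clear -e hkw; lia.
have muv := adj_1 hv huv; have muy := adj_1 hv huy.
have myv := adj_1 hv hyv; have mud := adj_1 hv hud.
have a1 := adj_pos huv.
have a2 : 0 < rem_edge m u v (w, w) by rewrite remE; ebsimp; rewrite subn0.
have a3 : u != w -> m (u, w) = 0 by move=> hh; apply: nadj_0.
have a4 : v != w -> m (v, w) = 0 by move=> hh; apply: nadj_0.
have a5 : u != w -> ~~ eb u w (v, w) by move=> _; ebsimp.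
have [g1 g2 g3] := move_gen hv a1 a2 a3 a4 a5.
set m1 := sw m u v w w in g1 g2 g3.
have e1 := swE (y, u) hs a1 a2.
have e2 := swE (y, v) hs a1 a2.
have e3 := swE (u, v) hs a1 a2.
have e4 := swE (u, w) hs a1 a2.
have e5 := swE (u, d) hs a1 a2.
have e6 := swE (w, d) hs a1 a2.
move: e1 e2 e3 e4 e5 e6; ebsimp; rewrite -/m1 => e1 e2 e3 e4 e5 e6.
have hs1 := valid_sym g1.
have myu : m (y, u) = 1 by rewrite hs.
have mwd : m (w, d) = 0 by apply: nadj_0.
have b1 : 0 < m1 (y, u) by clear -e1 myu; lia.
have b2 : 0 < rem_edge m1 y u (y, v).
  by rewrite remE; ebsimp; rewrite subn0; clear -e2 myv; lia.
have b4 : u != v -> m1 (u, v) = 0 by move=> _; clear -e3 muv; lia.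
have [f1 f2 f3] := move_gen g1 b1 b2 ltac:(by rewrite eqxx) b4 ltac:(by rewrite eqxx).
set m2 := sw m1 y u y v in f1 f2 f3.
have q1 := swE (u, w) hs1 b1 b2.
have q2 := swE (u, d) hs1 b1 b2.
have q3 := swE (w, d) hs1 b1 b2.
move: q1 q2 q3; ebsimp; rewrite -/m2 => q1 q2 q3.
have c1 : 0 < m2 (u, w) by clear -q1 e4; lia.
have c2 : 0 < rem_edge m2 u w (u, d).
  by rewrite remE; ebsimp; rewrite subn0; clear -q2 e5 mud; lia.
have c4 : w != d -> m2 (w, d) = 0 by move=> _; clear -q3 e6 mwd; lia.
have [h1 h2 h3] := move_gen f1 c1 c2 ltac:(by rewrite eqxx) c4 ltac:(by rewrite eqxx).
exists (sw m2 u w u d); split => //.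
  apply: rt_trans g2 _; exact: rt_trans f2 h2.
move: g3 f3 h3; ebsimp => g3 f3 h3; clear -g3 f3 h3; lia.
Qed.

End Moves.


Definition matchingb (V : finType) (m : mgraph V) :=
  [forall x, [forall y, [forall z, adj m x y ==> adj m x z ==> (y == z)]]].

Section Reduce.
Variable V : finType.
Variable k : V -> nat.
Hypothesis hk : forall u, 1 <= k u.
Hypothesis hodd : exists u, odd (k u).
Hypothesis hv2 : exists v, (k v < #|V|.-1) || odd (k v - #|V|.-1).
Implicit Types (m : mgraph V) (u v w a b c d s t y : V).

Lemma reduce m : valid k m -> ~~ matchingb m ->
  exists m', [/\ valid k m', reach k m m' & L m' = (L m).+1].
Proof.
move=> hv hnm.
have asym : forall s t, adj m s t = adj m t s := fun s t => adj_sym s t hv.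
case: (boolP [exists u, [exists v, [exists y, [&& adj m u v, adj m u y, v != y & ~~ adj m v y]]]]).
  move=> /existsP [u /existsP [v /existsP [y /and4P [h1 h2 h3 h4]]]].
  exact: moveB hv h1 h2 h3 h4.
move=> hnc.
have htr : transb m.
  move=> a b c hab hbc hac; apply/negPn/negP => hn; move/negP: hnc; apply.
  apply/existsP; exists b; apply/existsP; exists a; apply/existsP; exists c.
  by rewrite asym hab hbc hac hn.
move: hnm => /forallPn [u /forallPn [v /forallPn [y]]]; rewrite !negb_imply => /and3P [huv huy hvy].
have hvy' : adj m v y by apply: (htr _ u); rewrite // asym.
case: (boolP [exists w, [exists w', [&& adj m w w', w != u & ~~ adj m u w]]]).
  move=> /existsP [w /existsP [w' /and3P [h1 h2 h3]]].
  exact: moveAB hv htr huv huy hvy h1 h2 h3.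
move=> hn1.
have hiso : forall w, w != u -> ~~ adj m u w -> forall z, ~~ adj m w z.
  move=> w hwu hnuw z; apply/negP => hwz; move/negP: hn1; apply.
  apply/existsP; exists w; apply/existsP; exists z; by rewrite hwz hwu hnuw.
have nuv := adj_neq huv; have nuy := adj_neq huy.
case: (boolP [exists w, (w != u) && ~~ adj m u w]).
  move=> /existsP [w /andP [hwu hnuw]].
  case: (boolP [exists d, [&& adj m u d, d != v & d != y]]).
    move=> /existsP [d /and3P [hud hdv hdy]].
    apply: (moveCBB hv huv huy _ hud hdv hdy hwu (hiso w hwu hnuw) (hk w)).
    by rewrite asym.
  move=> hn4.
  have hnd : forall d, adj m u d -> (d == v) || (d == y).
    move=> d hud; apply/negPn/negP => hd; move/negP: hn4; apply; apply/existsP; exists d.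
    by rewrite hud /=; move: hd; rewrite negb_or.
  case: hodd => o ho.
  have := odd_nd o hv; rewrite ho (nd_card _ hv).
  case: (eqVneq o u) => [->|hou].
    have -> : [set z | adj m u z] = [set v; y].
      apply/setP => z; rewrite !inE; apply/idP/idP; first exact: hnd.
      by case/orP => /eqP ->.
    by rewrite cards2 hvy.
  case: (eqVneq o v) => [->|hov].
    have -> : [set z | adj m v z] = [set u; y].
      apply/setP => z; rewrite !inE; apply/idP/idP.
        move=> hvz; case: (eqVneq z u) => [//|hzu].
        have : adj m u z by rewrite asym; apply: (htr _ v); rewrite // asym.
        move=> /hnd /orP [/eqP hzv|->]; last by rewrite orbT.
        by move: (adj_neq hvz); rewrite hzv eqxx.
      by case/orP => /eqP ->; rewrite // asym.
    by rewrite cards2 nuy.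
  case: (eqVneq o y) => [->|hoy].
    have -> : [set z | adj m y z] = [set u; v].
      apply/setP => z; rewrite !inE; apply/idP/idP.
        move=> hyz; case: (eqVneq z u) => [//|hzu].
        have : adj m u z by rewrite asym; apply: (htr _ y); rewrite // asym.
        move=> /hnd /orP [->|/eqP hzy]; first by rewrite orbT.
        by move: (adj_neq hyz); rewrite hzy eqxx.
      by case/orP => /eqP ->; rewrite // asym.
    by rewrite cards2 nuv.
  have -> : [set z | adj m o z] = set0.
    apply/setP => z; rewrite !inE; apply/negP => hoz.
    have : adj m u o.
      case: (boolP (adj m u o)) => // hn.
      by move/negP: (hiso o hou hn z).
    move=> /hnd /orP [/eqP hov'|/eqP hoy'].
      by move: hov; rewrite hov' eqxx.
    by move: hoy; rewrite hoy' eqxx.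
  by rewrite cards0.
move=> hn2.
have hall : forall w, w != u -> adj m u w.
  move=> w hwu; apply/negPn/negP => hn; move/negP: hn2; apply; apply/existsP; exists w.
  by rewrite hwu hn.
have hcomp : forall s, nd m s = #|V|.-1.
  move=> s; rewrite (nd_card _ hv) -(card_neq s); apply: eq_card => z; rewrite !inE.
  apply/idP/idP => [/adj_neq|hzs]; first by rewrite eq_sym.
  case: (eqVneq s u) => [hsu|hsu]; first by subst s; apply: hall.
  case: (eqVneq z u) => [->|hzu]; first by rewrite asym; apply: hall.
  apply: (htr _ u); [by rewrite asym; apply: hall | by apply: hall | by rewrite eq_sym].
case: hv2 => x /orP [hlt | hodd'].
  have := valid_k x hv; rewrite hcomp => e; move: hlt; rewrite e; clear; lia.
have := valid_k x hv; rewrite hcomp => e; move: hodd'; rewrite e addKn oddM /=.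
done.
Qed.

End Reduce.


Ltac ebsimp := rewrite ?ebE ?eqxx; neqs; rewrite /= ?andbF ?andbT ?orbF ?orbT.

Section Matching.
Variable V : finType.
Variable k : V -> nat.
Implicit Types (m M : mgraph V) (u v w a b c d s t y : V).

Lemma matchingP m x y z : matchingb m -> adj m x y -> adj m x z -> y = z.
Proof.
move=> /forallP /(_ x) /forallP /(_ y) /forallP /(_ z) h hy hz.
by move: h; rewrite hy hz /= => /eqP.
Qed.

Lemma match_odd m s t : valid k m -> matchingb m -> adj m s t -> odd (k s).
Proof.
move=> hv hm hst; rewrite (odd_nd s hv) (nd_card _ hv).
have -> : [set z | adj m s z] = [set t].
  apply/setP => z; rewrite !inE; apply/idP/idP => [hz|/eqP ->] //.
  by apply/eqP; apply: (matchingP hm hz hst).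
by rewrite cards1.
Qed.

Lemma odd_nbr m s : valid k m -> odd (k s) -> exists t, adj m s t.
Proof.
move=> hv ho; move: ho; rewrite (odd_nd s hv) (nd_card _ hv).
case: (eqVneq [set z | adj m s z] set0) => [->|]; first by rewrite cards0.
by case/set0Pn => t; rewrite inE => h _; exists t.
Qed.

Definition Sd m M := [set p : V * V | adj M p.1 p.2 && ~~ adj m p.1 p.2].

Lemma match_base m M : valid k m -> valid k M -> matchingb m -> matchingb M ->
  Sd m M = set0 -> m = M.
Proof.
move=> hv hV hm hM hS.
have h1 : forall s t, adj M s t -> adj m s t.
  move=> s t h; apply/negPn/negP => hn.
  by have := in_set0 (s, t); rewrite -hS inE /= h hn.
have h2 : forall s t, adj m s t -> adj M s t.
  move=> s t h; have [t' ht'] := odd_nbr hV (match_odd hv hm h).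
  by rewrite -(matchingP hm (h1 _ _ ht') h).
apply: (valid_eq hv hV) => s t hst.
case: (boolP (adj m s t)) => h.
  by rewrite (adj_1 hv h) (adj_1 hV (h2 _ _ h)).
rewrite (nadj_0 hst h) (nadj_0 hst) //.
by apply: contraNN h; apply: h1.
Qed.

Lemma match_step m M : valid k m -> valid k M -> matchingb m -> matchingb M ->
  Sd m M != set0 ->
  exists m', [/\ valid k m', reach k m m', L m' = L m & #|Sd m' M| < #|Sd m M|].
Proof.
move=> hv hV hm hM /set0Pn [[a c]]; rewrite inE /= => /andP [hMac hnac].
have asym : forall s t, adj m s t = adj m t s := fun s t => adj_sym s t hv.
have Asym : forall s t, adj M s t = adj M t s := fun s t => adj_sym s t hV.
have hs := valid_sym hv.
have [b hab] := odd_nbr hv (match_odd hV hM hMac).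
have hMca : adj M c a by rewrite Asym.
have [d hcd] := odd_nbr hv (match_odd hV hM hMca).
have nac := adj_neq hMac; have nab := adj_neq hab; have ncd := adj_neq hcd.
have nbc : b != c by apply: (contraNneq _ hnac) => <-.
have nda : d != a by apply: (contraNneq _ hnac) => e; rewrite asym -e.
have nbd : b != d.
  apply: (contraNneq _ nac) => e.
  have e1 : adj m b a by rewrite asym.
  have e2 : adj m b c by rewrite e asym.
  apply/eqP; exact: matchingP hm e1 e2.
have nnbd : ~~ adj m b d.
  apply/negP => hbd.
  have e1 : adj m b a by rewrite asym.
  by move: nda; rewrite (matchingP hm hbd e1) eqxx.
have a1 := adj_pos hab.
have a2 : 0 < rem_edge m a b (c, d).
  by rewrite remE; ebsimp; rewrite subn0; apply: adj_pos.
have a3 : a != c -> m (a, c) = 0 by move=> hh; apply: nadj_0.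
have a4 : b != d -> m (b, d) = 0 by move=> hh; apply: nadj_0.
have a5 : a != c -> ~~ eb a c (b, d) by move=> _; ebsimp.
have [g1 g2 g3] := move_gen hv a1 a2 a3 a4 a5.
exists (sw m a b c d); split => //.
  by move: g3; ebsimp => g3; clear -g3; lia.
apply: proper_card; apply/properP; split.
  apply/subsetP => [[s t]]; rewrite !inE /= => /andP [hMst hn]; rewrite hMst /=.
  apply/negP => hst; apply: (negP hn).
  have H := swE (s, t) hs a1 a2.
  have E1 : eb a b (s, t) = false.
    apply/negP => /orP [/eqP [e1 e2]|/eqP [e1 e2]]; subst s t.
      by move: nbc; rewrite (matchingP hM hMst hMac) eqxx.
    have e3 : adj M a b by rewrite Asym.
    by move: nbc; rewrite (matchingP hM e3 hMac) eqxx.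
  have E2 : eb c d (s, t) = false.
    apply/negP => /orP [/eqP [e1 e2]|/eqP [e1 e2]]; subst s t.
      by move: nda; rewrite (matchingP hM hMst hMca) eqxx.
    have e3 : adj M c d by rewrite Asym.
    by move: nda; rewrite (matchingP hM e3 hMca) eqxx.
  rewrite E1 E2 /= in H.
  rewrite /adj (adj_neq hst) /=; move: (adj_pos hst) => hp.
  move: H hp; set X := sw _ _ _ _ _ _; set Y := m _; clear; lia.
exists (a, c); first by rewrite inE /= hMac hnac.
rewrite inE /= hMac /= negbK /adj nac /= swR [eb a c _]ebE !eqxx /=.
by rewrite addn1 addSn.
Qed.

End Matching.


Section Main.
Variable V : finType.
Variable k : V -> nat.
Hypothesis hk : forall u, 1 <= k u.
Hypothesis hodd : exists u, odd (k u).
Hypothesis hv2 : exists v, (k v < #|V|.-1) || odd (k v - #|V|.-1).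
Implicit Types (m M : mgraph V).

Lemma exists_matching m : valid k m -> exists M, [/\ valid k M, matchingb M & reach k m M].
Proof.
move=> hv.
have : \sum_(u : V) k u - L m <= \sum_(u : V) k u - L m by [].
move: {2}(_ - _) => n; elim: n m hv => [|n IH] m hv hn;
  case: (boolP (matchingb m)) => hm; try by exists m; split => //; apply: rt_refl.
  have [m' [hv' hr hL]] := reduce hk hodd hv2 hv hm.
  have := L_le hv'; move: hn; rewrite hL; clear; lia.
have [m' [hv' hr hL]] := reduce hk hodd hv2 hv hm.
have hn' : \sum_(u : V) k u - L m' <= n.
  have := L_le hv'; move: hn; rewrite hL; clear; lia.
have [M [h1 h2 h3]] := IH m' hv' hn'.
by exists M; split => //; apply: rt_trans hr h3.
Qed.

Lemma to_M M m : valid k M -> matchingb M -> valid k m -> reach k m M.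
Proof.
move=> hV hM hv.
set B := #|{: V * V}|.+1.
have hSB : forall m', #|Sd m' M| < B by move=> m'; rewrite ltnS max_card.
have : (\sum_(u : V) k u - L m) * B + #|Sd m M| <= (\sum_(u : V) k u - L m) * B + #|Sd m M| by [].
move: {2}(_ + _) => n; elim: n m hv => [|n IH] m hv hn.
  case: (boolP (matchingb m)) => hm.
    case: (eqVneq (Sd m M) set0) => hS; first by rewrite (match_base hv hV hm hM hS); apply: rt_refl.
    move: hn hS; rewrite -cards_eq0; set s := #|Sd m M|; set x := (_ - _) * B; clear; lia.
  have [m' [hv' hr hL]] := reduce hk hodd hv2 hv hm.
  have := L_le hv'; have := hSB m; move: hn; rewrite hL.
  set x := \sum_(u : V) k u; set s := #|_|; clear; nia.
case: (boolP (matchingb m)) => hm.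
  case: (eqVneq (Sd m M) set0) => hS; first by rewrite (match_base hv hV hm hM hS); apply: rt_refl.
  have [m' [hv' hr hL hlt]] := match_step hv hV hm hM hS.
  have hn' : (\sum_(u : V) k u - L m') * B + #|Sd m' M| <= n.
    move: hn hlt; rewrite hL; set x := (_ - _) * B; clear; lia.
  exact: rt_trans hr (IH m' hv' hn').
have [m' [hv' hr hL]] := reduce hk hodd hv2 hv hm.
have hn' : (\sum_(u : V) k u - L m') * B + #|Sd m' M| <= n.
  have := L_le hv'; have := hSB m'; move: hn; rewrite hL.
  set x := \sum_(u : V) k u; set s := #|Sd m M|; set s' := #|Sd m' M|.
  move=> hn hs' hle.
  have hp : 0 < x - L m by clear -hle; lia.
  move: hn hp; rewrite ?subnS.
  case: (x - L m) => [|z] // hn _ /=; rewrite mulSn in hn.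
  clear -hn hs'; lia.
exact: rt_trans hr (IH m' hv' hn').
Qed.

Lemma connected_of : ml_connected k.
Proof.
move=> m m' hv hv'.
have [M [hV hM hr]] := exists_matching hv.
apply: rt_trans hr _; apply: reach_sym; exact: to_M.
Qed.

End Main.


Theorem theorem2 (V : finType) (k : V -> nat)
  (hk : forall u, 1 <= k u)
  (htwo : exists m m' : mgraph V,
            is_ml_graph k m /\ is_ml_graph k m' /\ m <> m') :
  ml_connected k <->
  ((exists u, odd (k u)) /\
   (exists v, (k v < #|V|.-1) || odd (k v - #|V|.-1))).
Proof.
split; last by case=> hodd hv2; apply: connected_of.
move=> hc.
have [m1 [m2 [hv1 [hv2 hne]]]] := htwo.
have pick : forall m0 : mgraph V, exists z, valid k z /\ z <> m0.
  move=> m0; case: (eqVneq m1 m0) => [e|hz].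
    exists m2; split; first exact: hv2.
    by move=> e'; apply: hne; rewrite e e'.
  by exists m1; split; [exact: hv1 | apply/eqP].
split.
  case: (boolP [exists u, odd (k u)]) => [/existsP //|hn].
  have hev : forall u, ~~ odd (k u).
    by move=> u; apply: (contraNN _ hn) => h; apply/existsP; exists u.
  have [z [hz hzne]] := pick (mloops k).
  by case: (not_conn (mloops_valid hev) hz hzne (fun z hz hsw => mloops_iso hev hz hsw) hc).
case: (boolP [exists v, (k v < #|V|.-1) || odd (k v - #|V|.-1)]) => [/existsP //|hn].
have hev : forall u, #|V|.-1 <= k u /\ ~~ odd (k u - #|V|.-1).
  move=> u; have : ~~ ((k u < #|V|.-1) || odd (k u - #|V|.-1)).
    by apply: (contraNN _ hn) => h; apply/existsP; exists u.
  by rewrite negb_or -leqNgt => /andP.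
have [z [hz hzne]] := pick (mcomp k).
by case: (not_conn (mcomp_valid hev) hz hzne (fun z hz hsw => mcomp_iso hev hz hsw) hc).
Qed.
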